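(* Let $\varepsilon\in\{-1,1\}$, $\nu>0$ and let $l$ be a non-negative integer. Then there is $C>0$ such that $$\|\partial_x^l K(\cdot,\cdot,t)\|_{L^\infty(\mathbb{R}^2)}\le C t^{-\frac54-\frac l2},\qquad t>0 .$$
   Context: $K(x,y,t):=t^{-5/4}K_*(xt^{-1/2},yt^{-3/4})$ for $(x,y)\in\mathbb{R}^2$, $t>0$, where $$K_*(x,y):=\frac{1}{4\pi^{3/2}\nu^{3/4}}\int_0^\infty r^{-1/4}e^{-r}\cos\Big(x\sqrt{\tfrac{r}{\nu}}+\frac{y^2}{4\varepsilon}\sqrt{\tfrac{r}{\nu}}-\frac{\pi}{4}\varepsilon\Big)\,dr .$$ *)

(* Defs.v *)
From Stdlib Require Import Reals.
From Coquelicot Require Import Coquelicot.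
Open Scope R_scope.

Definition Kstar_integrand (eps nu x y : R) (r : R) : R :=
  Rpower r (-1/4) * exp (- r) *
  cos (x * sqrt (r / nu) + y ^ 2 / (4 * eps) * sqrt (r / nu) - PI / 4 * eps).

Definition Kstar (eps nu x y : R) : R :=
  / (4 * Rpower PI (3/2) * Rpower nu (3/4)) *
  RInt_gen (Kstar_integrand eps nu x y) (at_right 0) (Rbar_locally p_infty).

Definition K (eps nu x y t : R) : R :=
  Rpower t (-5/4) * Kstar eps nu (x * Rpower t (-1/2)) (y * Rpower t (-3/4)).

(* Main.v *)
Require Import Defs.
From Stdlib Require Import Reals.
From Coquelicot Require Import Coquelicot.
From Stdlib Require Import Lra FunctionalExtensionality.
Open Scope R_scope.

Lemma chasles_R (f : R -> R) a b c : ex_RInt f a b -> ex_RInt f b c ->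
  RInt f a b + RInt f b c = RInt f a c.
Proof. intros H1 H2. exact (RInt_Chasles f a b c H1 H2). Qed.

Lemma RInt_dom_aux (f g Gd : R -> R) p q : p <= q ->
  (forall r, p <= r <= q -> continuous f r) ->
  (forall r, p <= r <= q -> is_derive Gd r (g r)) ->
  (forall r, p <= r <= q -> continuous g r) ->
  (forall r, p <= r <= q -> Rabs (f r) <= g r) ->
  Rabs (RInt f p q) <= Gd q - Gd p.
Proof.
  intros Hpq Hf HG Hg Hb.
  assert (Ef : ex_RInt f p q).
  { apply (ex_RInt_continuous (V:=R_CompleteNormedModule)). intros z Hz. apply Hf.
    rewrite Rmin_left in Hz by lra; rewrite Rmax_right in Hz by lra; lra. }
  assert (Ig : is_RInt g p q (minus (Gd q) (Gd p))).
  { apply (is_RInt_derive (V:=R_CompleteNormedModule)); intros z Hz;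
    rewrite Rmin_left in Hz by lra; rewrite Rmax_right in Hz by lra.
    now apply HG. now apply Hg. }
  eapply Rle_trans. apply abs_RInt_le; auto.
  replace (Gd q - Gd p) with (RInt g p q).
  2:{ rewrite (is_RInt_unique (V:=R_CompleteNormedModule) _ _ _ _ Ig). reflexivity. }
  apply RInt_le; auto.
  - apply (ex_RInt_continuous (V:=R_CompleteNormedModule)). intros z Hz.
    rewrite Rmin_left in Hz by lra; rewrite Rmax_right in Hz by lra.
    apply (continuous_comp f Rabs). now apply Hf. apply continuous_Rabs.
  - eexists; eauto.
  - intros; apply Hb; lra.
Qed.

Lemma RInt_dom (f g Gd : R -> R) p q :
  (forall r, Rmin p q <= r <= Rmax p q -> continuous f r) ->
  (forall r, Rmin p q <= r <= Rmax p q -> is_derive Gd r (g r)) ->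
  (forall r, Rmin p q <= r <= Rmax p q -> continuous g r) ->
  (forall r, Rmin p q <= r <= Rmax p q -> Rabs (f r) <= g r) ->
  Rabs (RInt f p q) <= Rabs (Gd q - Gd p).
Proof.
  intros Hf HG Hg Hb. destruct (Rle_dec p q) as [H|H].
  - rewrite Rmin_left in * by lra; rewrite Rmax_right in * by lra.
    eapply Rle_trans. apply (RInt_dom_aux f g Gd); auto. apply Rle_abs.
  - rewrite Rmin_right in * by lra; rewrite Rmax_left in * by lra.
    rewrite <- opp_RInt_swap.
    2:{ apply (ex_RInt_continuous (V:=R_CompleteNormedModule)). intros z Hz. apply Hf.
        rewrite Rmin_left in Hz by lra; rewrite Rmax_right in Hz by lra; lra. }
    change (Rabs (- RInt f q p) <= Rabs (Gd q - Gd p)).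
    rewrite Rabs_Ropp.
    eapply Rle_trans. apply (RInt_dom_aux f g Gd); auto; lra.
    rewrite <- Rabs_Ropp. replace (- (Gd q - Gd p)) with (Gd p - Gd q) by ring.
    apply Rle_abs.
Qed.

Lemma exp_le_exp' x y : x <= y -> exp x <= exp y.
Proof. intros [H|H]. left; now apply exp_increasing. subst; lra. Qed.

Lemma ex_gen (f : R -> R) (C : R) : 0 < C ->
  (forall r, 0 < r -> continuous f r) ->
  (forall r, 0 < r <= 1 -> Rabs (f r) <= C / sqrt r) ->
  (forall r, 1 <= r -> Rabs (f r) <= C * exp (-r/2)) ->
  ex_RInt_gen f (at_right 0) (Rbar_locally p_infty).
Proof.
  intros HC Hc Hlo Hhi.
  assert (exR : forall p q, 0 < p -> 0 < q -> ex_RInt f p q).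
  { intros p q Hp Hq. apply (ex_RInt_continuous (V:=R_CompleteNormedModule)).
    intros z Hz. apply Hc. destruct (Rle_dec p q).
    rewrite Rmin_left in Hz; lra. rewrite Rmin_right in Hz; lra. }
  assert (lo : forall d a a', 0 < d <= 1 -> 0 < a <= d -> 0 < a' <= d ->
            Rabs (RInt f a' a) <= 2 * C * sqrt d).
  { intros d a a' Hd Ha Ha'.
    eapply Rle_trans.
    apply (RInt_dom f (fun r => C / sqrt r) (fun r => 2 * C * sqrt r)).
    - intros r Hr. apply Hc. destruct (Rle_dec a' a).
      rewrite Rmin_left in Hr; lra. rewrite Rmin_right in Hr; lra.
    - intros r Hr. assert (0 < r). { destruct (Rle_dec a' a).
      rewrite Rmin_left in Hr; lra. rewrite Rmin_right in Hr; lra. }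
      auto_derive. lra. field. apply Rgt_not_eq, sqrt_lt_R0; lra.
    - intros r Hr. assert (0 < r). { destruct (Rle_dec a' a).
      rewrite Rmin_left in Hr; lra. rewrite Rmin_right in Hr; lra. }
      apply (ex_derive_continuous (K:=R_AbsRing) (V:=R_NormedModule) (fun r => C / sqrt r)). auto_derive. split. lra.
      split; auto. apply Rgt_not_eq, sqrt_lt_R0; lra.
    - intros r Hr. assert (0 < r /\ r <= d). { destruct (Rle_dec a' a).
      rewrite Rmin_left in Hr by lra; rewrite Rmax_right in Hr by lra; lra.
      rewrite Rmin_right in Hr by lra; rewrite Rmax_left in Hr by lra; lra. }
      apply Hlo; lra.
    - assert (0 <= sqrt a <= sqrt d) by (split; [apply sqrt_pos| apply sqrt_le_1_alt; lra]).
      assert (0 <= sqrt a' <= sqrt d) by (split; [apply sqrt_pos| apply sqrt_le_1_alt; lra]).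
      apply Rabs_le. nra. }
  assert (hi : forall B b b', 1 <= B -> B < b -> B < b' ->
            Rabs (RInt f b b') <= 2 * C * exp (- B / 2)).
  { intros B b b' HB Hb Hb'.
    eapply Rle_trans.
    apply (RInt_dom f (fun r => C * exp (- r / 2)) (fun r => - 2 * C * exp (- r / 2))).
    - intros r Hr. apply Hc. destruct (Rle_dec b b').
      rewrite Rmin_left in Hr; lra. rewrite Rmin_right in Hr; lra.
    - intros r Hr. auto_derive. auto. unfold Rdiv. field.
    - intros r Hr. apply (ex_derive_continuous (K:=R_AbsRing) (V:=R_NormedModule) (fun r => C * exp (- r / 2))). auto_derive. auto.
    - intros r Hr. assert (B <= r). { destruct (Rle_dec b b').
      rewrite Rmin_left in Hr by lra; lra.
      rewrite Rmin_right in Hr by lra; lra. }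
      apply Hhi; lra.
    - assert (0 <= exp (-b/2) <= exp (-B/2)).
      { split. left; apply exp_pos. apply exp_le_exp'. lra. }
      assert (0 <= exp (-b'/2) <= exp (-B/2)).
      { split. left; apply exp_pos. apply exp_le_exp'. lra. }
      apply Rabs_le. nra. }
  assert (Hcauchy : exists l : R, filterlim (fun ab : R * R => RInt f (fst ab) (snd ab))
                     (filter_prod (at_right 0) (Rbar_locally p_infty)) (locally l)).
  { apply (filterlim_locally_cauchy (U:=R_CompleteSpace)).
    intros eps.
    set (e' := eps / (4 * (C + 1))).
    assert (He' : 0 < e'). { unfold e'. apply Rdiv_lt_0_compat. apply cond_pos. lra. }
    assert (He'2 : e' * (4 * (C + 1)) = eps). { unfold e'. field. lra. }
    set (d := Rmin 1 (e' ^ 2)).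
    assert (Hd : 0 < d <= 1).
    { unfold d. split. apply Rmin_pos. lra. apply pow_lt; lra. apply Rmin_l. }
    assert (Hsd : sqrt d <= e').
    { rewrite <- (sqrt_pow2 e') by lra. apply sqrt_le_1_alt. apply Rmin_r. }
    set (B := Rmax 1 (2 / e')).
    assert (HB : 1 <= B) by apply Rmax_l.
    assert (HeB : exp (- B / 2) < e').
    { replace (- B / 2) with (- (B / 2)) by field. rewrite exp_Ropp.
      assert (2 / e' <= B) by apply Rmax_r.
      assert (1 + B / 2 <= exp (B / 2)) by apply exp_ineq1_le.
      assert (1 / e' < exp (B / 2)).
      { assert (2 / e' = 2 * (1 / e')) by (field; lra). lra. }
      rewrite <- (Rinv_inv e'). apply Rinv_lt_contravar.
      apply Rmult_lt_0_compat. apply Rinv_0_lt_compat; lra. apply exp_pos.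
      unfold Rdiv in H1. rewrite Rmult_1_l in H1. exact H1. }
    exists (fun ab : R * R => 0 < fst ab < d /\ B < snd ab).
    split.
    - apply (Filter_prod _ _ _ (fun a => 0 < a < d) (fun b => B < b)).
      + exists (mkposreal d (proj1 Hd)). intros y Hy Hy0.
        unfold ball in Hy; simpl in Hy; unfold AbsRing_ball, abs, minus, plus, opp in Hy;
        simpl in Hy. split. lra. rewrite Ropp_0, Rplus_0_r in Hy.
        apply Rabs_lt_between in Hy. lra.
      + exists B. auto.
      + intros x y Hx Hy. simpl. auto.
    - intros [a b] [a' b'] [Ha Hb] [Ha' Hb']. simpl in *.
      unfold ball; simpl; unfold AbsRing_ball, abs, minus, plus, opp; simpl.
      rewrite <- (chasles_R f a' a b') by (apply exR; lra).
      rewrite <- (chasles_R f a b b') by (apply exR; lra).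
      replace (RInt f a' a + (RInt f a b + RInt f b b') + - RInt f a b)
        with (RInt f a' a + RInt f b b') by ring.
      eapply Rle_lt_trans. apply Rabs_triang.
      assert (Rabs (RInt f a' a) <= 2 * C * sqrt d) by (apply lo; lra).
      assert (Rabs (RInt f b b') <= 2 * C * exp (- B / 2)) by (apply hi; lra).
      assert (2 * C * sqrt d <= 2 * C * e') by nra.
      assert (2 * C * exp (- B / 2) < 2 * C * e') by nra.
      nra. }
  destruct Hcauchy as [l Hl].
  exists l. intros P HP. unfold filtermapi.
  apply (filter_imp (fun ab : R * R => ex_RInt f (fst ab) (snd ab) /\ P (RInt f (fst ab) (snd ab)))).
  { intros ab [H1 H2]. exists (RInt f (fst ab) (snd ab)). split; auto.
    now apply (RInt_correct (V:=R_CompleteNormedModule)). }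
  apply filter_and.
  - apply (Filter_prod _ _ _ (fun a => 0 < a) (fun b => 0 < b)).
    + exists (mkposreal 1 Rlt_0_1). auto.
    + exists 0. auto.
    + intros x y Hx Hy. simpl. apply exR; auto.
  - apply Hl. exact HP.
Qed.

Definition aa (nu r : R) := sqrt (r / nu).
Definition ww (r : R) := Rpower r (-1/4) * exp (- r).
Definition mf (nu : R) (k : nat) (r : R) := ww r * aa nu r ^ k.
Definition hf (nu : R) (k : nat) (th u r : R) := ww r * aa nu r ^ k * cos (u * aa nu r + th).

Lemma ln_le0 r : 0 < r -> r <= 1 -> ln r <= 0.
Proof. intros H [H1|H1]. left. rewrite <- ln_1. now apply ln_increasing.
  subst. rewrite ln_1; lra. Qed.
Lemma ln_ge0 r : 1 <= r -> 0 <= ln r.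
Proof. intros [H1|H1]. left. rewrite <- ln_1. apply ln_increasing; lra.
  subst. rewrite ln_1; lra. Qed.

Lemma exp_pow' x n : exp x ^ n = exp (INR n * x).
Proof. induction n. simpl. rewrite Rmult_0_l, exp_0. reflexivity.
  rewrite S_INR. simpl pow. rewrite IHn. rewrite <- exp_plus. f_equal. ring. Qed.

Lemma aa_bound nu k r : 0 < nu -> 0 <= r ->
  aa nu r ^ k <= (1 + 2 * (INR k + 1) / nu) ^ k * exp (r / 2).
Proof.
  intros Hnu Hr. set (L := 1 + 2 * (INR k + 1) / nu).
  assert (Hk : 0 < INR k + 1) by (pose proof (pos_INR k); lra).
  assert (HL1 : 1 <= L). { unfold L. assert (0 <= 2 * (INR k + 1) / nu).
    apply Rmult_le_pos. lra. left; apply Rinv_0_lt_compat; lra. lra. }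
  assert (Ha0 : 0 <= aa nu r) by apply sqrt_pos.
  assert (Ha1 : aa nu r <= 1 + r / nu).
  { unfold aa. assert (0 <= r / nu) by (apply Rmult_le_pos; [lra| left; apply Rinv_0_lt_compat; lra]).
    rewrite <- (sqrt_pow2 (1 + r / nu)) by lra. apply sqrt_le_1_alt. nra. }
  set (q := 1 + r / (2 * (INR k + 1))).
  assert (Hq1 : 1 <= q). { unfold q. assert (0 <= r / (2 * (INR k + 1))).
    apply Rmult_le_pos. lra. left; apply Rinv_0_lt_compat; lra. lra. }
  assert (Ha2 : 1 + r / nu <= L * q).
  { unfold L, q. assert (r / nu = (2 * (INR k + 1) / nu) * (r / (2 * (INR k + 1)))) by (field; lra).
    assert (0 <= 2 * (INR k + 1) / nu) by (apply Rmult_le_pos; [lra| left; apply Rinv_0_lt_compat; lra]).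
    assert (0 <= r / (2 * (INR k + 1))) by (apply Rmult_le_pos; [lra| left; apply Rinv_0_lt_compat; lra]).
    nra. }
  eapply Rle_trans. apply pow_incr. split. exact Ha0. eapply Rle_trans. exact Ha1. exact Ha2.
  rewrite Rpow_mult_distr. apply Rmult_le_compat_l. apply pow_le; lra.
  eapply Rle_trans. apply (Rle_pow q k (S k)); auto.
  replace (r / 2) with (INR (S k) * (r / (2 * (INR k + 1)))) by (rewrite S_INR; field; lra).
  rewrite <- exp_pow'. apply pow_incr. split. lra. unfold q.
  apply exp_ineq1_le.
Qed.

Lemma ww_pos r : 0 <= ww r.
Proof. unfold ww, Rpower. left. apply Rmult_lt_0_compat; apply exp_pos. Qed.

Lemma mf_bound nu k : 0 < nu -> exists C, 0 < C /\
  (forall r, 0 < r <= 1 -> 0 <= mf nu k r <= C / sqrt r) /\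
  (forall r, 1 <= r -> 0 <= mf nu k r <= C * exp (- r / 2)).
Proof.
  intros Hnu. set (L := 1 + 2 * (INR k + 1) / nu).
  assert (Hk : 0 < INR k + 1) by (pose proof (pos_INR k); lra).
  assert (HL1 : 1 <= L). { unfold L. assert (0 <= 2 * (INR k + 1) / nu).
    apply Rmult_le_pos. lra. left; apply Rinv_0_lt_compat; lra. lra. }
  exists (L ^ k). split. apply pow_lt; lra.
  assert (Hm0 : forall r, 0 <= mf nu k r).
  { intros r. unfold mf. apply Rmult_le_pos. apply ww_pos. apply pow_le, sqrt_pos. }
  assert (Hee : forall r, exp (- r) * exp (r / 2) = exp (- r / 2)).
  { intros r. rewrite <- exp_plus. f_equal. field. }
  split.
  - intros r Hr. split. apply Hm0. unfold mf, ww.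
    assert (Hp : Rpower r (-1/4) <= / sqrt r).
    { rewrite <- Rpower_sqrt by lra. rewrite <- Rpower_Ropp. unfold Rpower.
      apply exp_le_exp'. pose proof (ln_le0 r (proj1 Hr) (proj2 Hr)). nra. }
    pose proof (aa_bound nu k r Hnu ltac:(lra)) as Ha.
    assert (0 <= aa nu r ^ k) by (apply pow_le, sqrt_pos).
    assert (exp (- r / 2) <= 1). { rewrite <- exp_0. apply exp_le_exp'. lra. }
    assert (0 < exp (-r)) by apply exp_pos.
    assert (0 <= Rpower r (-1/4)) by (unfold Rpower; left; apply exp_pos).
    assert (0 < / sqrt r) by (apply Rinv_0_lt_compat, sqrt_lt_R0; lra).
    assert (0 < L ^ k) by (apply pow_lt; lra).
    fold L in Ha.
    assert (exp (- r) * aa nu r ^ k <= L ^ k).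
    { eapply Rle_trans. apply Rmult_le_compat_l. lra. exact Ha.
      replace (exp (- r) * (L ^ k * exp (r / 2))) with (L ^ k * (exp (- r) * exp (r / 2))) by ring.
      rewrite Hee. nra. }
    replace (Rpower r (-1/4) * exp (- r) * aa nu r ^ k) with (Rpower r (-1/4) * (exp (- r) * aa nu r ^ k)) by ring.
    replace (L ^ k / sqrt r) with (/ sqrt r * L ^ k) by (unfold Rdiv; ring).
    apply Rmult_le_compat; try lra. nra.
  - intros r Hr. split. apply Hm0. unfold mf, ww.
    assert (Hp : Rpower r (-1/4) <= 1).
    { unfold Rpower. rewrite <- exp_0. apply exp_le_exp'. pose proof (ln_ge0 r Hr). nra. }
    pose proof (aa_bound nu k r Hnu ltac:(lra)) as Ha. fold L in Ha.
    assert (0 <= aa nu r ^ k) by (apply pow_le, sqrt_pos).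
    assert (0 < exp (-r)) by apply exp_pos.
    assert (0 <= Rpower r (-1/4)) by (unfold Rpower; left; apply exp_pos).
    assert (0 < L ^ k) by (apply pow_lt; lra).
    assert (exp (- r) * aa nu r ^ k <= L ^ k * exp (- r / 2)).
    { eapply Rle_trans. apply Rmult_le_compat_l. lra. exact Ha.
      replace (exp (- r) * (L ^ k * exp (r / 2))) with (L ^ k * (exp (- r) * exp (r / 2))) by ring.
      rewrite Hee. lra. }
    replace (Rpower r (-1/4) * exp (- r) * aa nu r ^ k) with (Rpower r (-1/4) * (exp (- r) * aa nu r ^ k)) by ring.
    assert (0 <= exp (- r) * aa nu r ^ k) by nra.
    nra.
Qed.

Lemma divpos r nu : 0 < r -> 0 < nu -> 0 < r * / nu.
Proof. intros. apply Rmult_lt_0_compat; auto. now apply Rinv_0_lt_compat. Qed.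

Lemma hf_cont nu k th u r : 0 < nu -> 0 < r -> continuous (hf nu k th u) r.
Proof. intros Hnu Hr.
  apply (ex_derive_continuous (K:=R_AbsRing) (V:=R_NormedModule)).
  unfold hf, ww, aa, Rpower. auto_derive. pose proof (divpos r nu Hr Hnu). tauto.
Qed.

Lemma mf_cont nu k r : 0 < nu -> 0 < r -> continuous (mf nu k) r.
Proof. intros Hnu Hr.
  apply (ex_derive_continuous (K:=R_AbsRing) (V:=R_NormedModule)).
  unfold mf, ww, aa, Rpower. auto_derive. pose proof (divpos r nu Hr Hnu). tauto.
Qed.

Lemma hf_le_mf nu k th u r : Rabs (hf nu k th u r) <= mf nu k r.
Proof. unfold hf. fold (mf nu k r). rewrite Rabs_mult.
  assert (0 <= mf nu k r). { unfold mf. apply Rmult_le_pos. apply ww_pos. apply pow_le, sqrt_pos. }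
  rewrite (Rabs_right (mf nu k r)) by lra.
  pose proof (COS_bound (u * aa nu r + th)).
  assert (Rabs (cos (u * aa nu r + th)) <= 1) by (apply Rabs_le; lra). nra.
Qed.

Lemma hf_ex nu k th u : 0 < nu -> ex_RInt_gen (hf nu k th u) (at_right 0) (Rbar_locally p_infty).
Proof. intros Hnu. destruct (mf_bound nu k Hnu) as [C [HC [H1 H2]]].
  apply (ex_gen _ C HC).
  - intros; now apply hf_cont.
  - intros r Hr. eapply Rle_trans. apply hf_le_mf. apply H1; auto.
  - intros r Hr. eapply Rle_trans. apply hf_le_mf. apply H2; auto.
Qed.

Lemma mf_ex nu k : 0 < nu -> ex_RInt_gen (mf nu k) (at_right 0) (Rbar_locally p_infty).
Proof. intros Hnu. destruct (mf_bound nu k Hnu) as [C [HC [H1 H2]]].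
  apply (ex_gen _ C HC).
  - intros; now apply mf_cont.
  - intros r Hr. specialize (H1 r Hr). rewrite Rabs_right; lra.
  - intros r Hr. specialize (H2 r Hr). rewrite Rabs_right; lra.
Qed.

Lemma sin_lip x y : Rabs (sin x - sin y) <= Rabs (x - y).
Proof.
  destruct (MVT_gen sin y x cos) as [c [Hc Heq]].
  - intros; apply is_derive_sin.
  - intros. apply continuity_sin.
  - rewrite Heq, Rabs_mult. pose proof (COS_bound c).
    assert (Rabs (cos c) <= 1) by (apply Rabs_le; lra).
    pose proof (Rabs_pos (x - y)). nra.
Qed.

Lemma taylor_cos z d : Rabs (cos (z + d) - cos z + d * sin z) <= d ^ 2.
Proof.
  destruct (MVT_gen (fun s => cos (z + s) + s * sin z) 0 d (fun s => - sin (z + s) + sin z)) as [c [Hc Heq]].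
  - intros s _. auto_derive. auto. ring.
  - intros s _. apply derivable_continuous_pt. apply derivable_pt_plus.
    apply derivable_pt_comp. apply derivable_pt_plus. apply derivable_pt_const. apply derivable_pt_id.
    apply derivable_pt_cos. apply derivable_pt_mult. apply derivable_pt_id. apply derivable_pt_const.
  - simpl in Heq. rewrite Rplus_0_r, Rmult_0_l, Rplus_0_r in Heq.
    replace (cos (z + d) - cos z + d * sin z) with (cos (z + d) + d * sin z - cos z) by ring.
    rewrite Heq. rewrite Rminus_0_r, Rabs_mult.
    assert (Rabs (- sin (z + c) + sin z) <= Rabs c).
    { replace (- sin (z + c) + sin z) with (- (sin (z + c) - sin z)) by ring.
      rewrite Rabs_Ropp. eapply Rle_trans. apply sin_lip. right; f_equal; ring. }
    assert (Rabs c <= Rabs d).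
    { destruct (Rle_dec 0 d).
      rewrite Rmin_left in Hc by lra; rewrite Rmax_right in Hc by lra.
      rewrite !Rabs_right; lra.
      rewrite Rmin_right in Hc by lra; rewrite Rmax_left in Hc by lra.
      rewrite !Rabs_left1; lra. }
    replace (d ^ 2) with (Rabs d * Rabs d).
    2:{ rewrite <- Rabs_mult. simpl. rewrite Rmult_1_r. apply Rabs_right. nra. }
    pose proof (Rabs_pos d). pose proof (Rabs_pos c). nra.
Qed.

Definition G nu k th u := RInt_gen (hf nu k th u) (at_right 0) (Rbar_locally p_infty).
Definition M nu k := RInt_gen (mf nu k) (at_right 0) (Rbar_locally p_infty).

Lemma pt_bound nu k th u h x :
  Rabs (hf nu k th (u + h) x - hf nu k th u x - h * hf nu (S k) (th + PI / 2) u x)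
  <= h ^ 2 * mf nu (S (S k)) x.
Proof.
  unfold hf, mf. set (a := aa nu x). set (W := ww x). set (z := u * a + th).
  assert (E1 : cos ((u + h) * a + th) = cos (z + h * a)) by (unfold z; f_equal; ring).
  assert (E2 : cos (u * a + (th + PI / 2)) = - sin z).
  { replace (u * a + (th + PI / 2)) with (z + PI / 2) by (unfold z; ring).
    rewrite cos_plus, cos_PI2, sin_PI2. ring. }
  rewrite E1, E2. fold z.
  replace (W * a ^ k * cos (z + h * a) - W * a ^ k * cos z - h * (W * a ^ S k * - sin z))
    with ((W * a ^ k) * (cos (z + h * a) - cos z + h * a * sin z)) by (simpl; ring).
  rewrite Rabs_mult.
  assert (0 <= W * a ^ k) by (apply Rmult_le_pos; [apply ww_pos| apply pow_le, sqrt_pos]).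
  rewrite (Rabs_right (W * a ^ k)) by lra.
  pose proof (taylor_cos z (h * a)).
  replace (h ^ 2 * (W * a ^ S (S k))) with ((W * a ^ k) * (h * a) ^ 2) by (simpl; ring).
  apply Rmult_le_compat_l; auto.
Qed.

Lemma G_diff nu k th u h : 0 < nu ->
  Rabs (G nu k th (u + h) - G nu k th u - h * G nu (S k) (th + PI / 2) u) <= h ^ 2 * M nu (S (S k)).
Proof.
  intros Hnu.
  pose proof (RInt_gen_correct _ (hf_ex nu k th (u + h) Hnu)) as I1.
  pose proof (RInt_gen_correct _ (hf_ex nu k th u Hnu)) as I0.
  pose proof (RInt_gen_correct _ (hf_ex nu (S k) (th + PI / 2) u Hnu)) as I2.
  pose proof (RInt_gen_correct _ (mf_ex nu (S (S k)) Hnu)) as IM.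
  pose proof (is_RInt_gen_minus _ _ _ _ (is_RInt_gen_minus _ _ _ _ I1 I0) (is_RInt_gen_scal _ h _ I2)) as Ic.
  pose proof (is_RInt_gen_scal _ (h ^ 2) _ IM) as Im.
  assert (F1 : filter_prod (at_right 0) (Rbar_locally p_infty) (fun ab : R * R => fst ab <= snd ab)).
  { apply (Filter_prod _ _ _ (fun a => 0 < a < 1) (fun b => 1 < b)).
    - exists (mkposreal 1 Rlt_0_1). intros y Hy Hy0. split; auto.
      unfold ball in Hy; simpl in Hy; unfold AbsRing_ball, abs, minus, plus, opp in Hy;
      simpl in Hy. rewrite Ropp_0, Rplus_0_r in Hy. apply Rabs_lt_between in Hy. lra.
    - exists 1. auto.
    - intros; simpl; lra. }
  assert (F2 : filter_prod (at_right 0) (Rbar_locally p_infty) (fun ab : R * R =>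
     forall x, fst ab <= x <= snd ab ->
     norm (minus (minus (hf nu k th (u + h) x) (hf nu k th u x)) (scal h (hf nu (S k) (th + PI / 2) u x)))
       <= scal (h ^ 2) (mf nu (S (S k)) x))).
  { apply (Filter_prod _ _ _ (fun a => 0 < a < 1) (fun b => 1 < b)).
    - exists (mkposreal 1 Rlt_0_1). intros y Hy Hy0. split; auto.
      unfold ball in Hy; simpl in Hy; unfold AbsRing_ball, abs, minus, plus, opp in Hy;
      simpl in Hy. rewrite Ropp_0, Rplus_0_r in Hy. apply Rabs_lt_between in Hy. lra.
    - exists 1. auto.
    - intros a b _ _ x _. simpl. apply pt_bound. }
  pose proof (RInt_gen_norm _ _ _ _ F1 F2 Ic Im) as H.
  simpl in H. exact H.
Qed.

Lemma G_deriv nu k th u : 0 < nu -> is_derive (G nu k th) u (G nu (S k) (th + PI / 2) u).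
Proof.
  intros Hnu. apply is_derive_Reals. intros e He.
  set (M2 := M nu (S (S k))).
  assert (Hd : 0 < e / (Rabs M2 + 1)).
  { apply Rdiv_lt_0_compat; auto. pose proof (Rabs_pos M2); lra. }
  exists (mkposreal _ Hd). intros h Hh0 Hh. simpl in Hh.
  pose proof (G_diff nu k th u h Hnu) as HD. fold M2 in HD.
  replace ((G nu k th (u + h) - G nu k th u) / h - G nu (S k) (th + PI / 2) u)
    with ((G nu k th (u + h) - G nu k th u - h * G nu (S k) (th + PI / 2) u) / h)
    by (field; auto).
  unfold Rdiv. rewrite Rabs_mult, Rabs_inv.
  assert (Hah : 0 < Rabs h) by (apply Rabs_pos_lt; auto).
  assert (h ^ 2 = Rabs h * Rabs h).
  { rewrite <- Rabs_mult. rewrite Rabs_right. simpl; ring. apply Rle_ge. simpl. nra. }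
  assert (HM : h ^ 2 * M2 <= Rabs h * Rabs h * Rabs M2).
  { rewrite H. apply Rmult_le_compat_l. nra. apply Rle_abs. }
  apply (Rmult_lt_reg_r (Rabs h)); auto.
  rewrite Rmult_assoc, Rinv_l by lra. rewrite Rmult_1_r.
  eapply Rle_lt_trans. apply HD. eapply Rle_lt_trans. apply HM.
  assert (Rabs h * (Rabs M2 + 1) < e).
  { apply (Rmult_lt_reg_r (/ (Rabs M2 + 1))). apply Rinv_0_lt_compat; pose proof (Rabs_pos M2); lra.
    rewrite Rmult_assoc, Rinv_r by (pose proof (Rabs_pos M2); lra). rewrite Rmult_1_r. exact Hh. }
  pose proof (Rabs_pos M2). nra.
Qed.

Lemma filt1 : filter_prod (at_right 0) (Rbar_locally p_infty) (fun ab : R * R => fst ab <= snd ab).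
Proof.
  apply (Filter_prod _ _ _ (fun a => 0 < a < 1) (fun b => 1 < b)).
    - exists (mkposreal 1 Rlt_0_1). intros y Hy Hy0. split; auto.
      unfold ball in Hy; simpl in Hy; unfold AbsRing_ball, abs, minus, plus, opp in Hy;
      simpl in Hy. rewrite Ropp_0, Rplus_0_r in Hy. apply Rabs_lt_between in Hy. lra.
    - exists 1. auto.
    - intros; simpl; lra.
Qed.

Lemma G_bound nu k th u : 0 < nu -> Rabs (G nu k th u) <= M nu k.
Proof.
  intros Hnu.
  pose proof (RInt_gen_correct _ (hf_ex nu k th u Hnu)) as I0.
  pose proof (RInt_gen_correct _ (mf_ex nu k Hnu)) as IM.
  assert (F2 : filter_prod (at_right 0) (Rbar_locally p_infty) (fun ab : R * R =>
     forall x, fst ab <= x <= snd ab -> norm (hf nu k th u x) <= mf nu k x)).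
  { apply (Filter_prod _ _ _ (fun a => True) (fun b => True)).
    - exists (mkposreal 1 Rlt_0_1). auto.
    - exists 1. auto.
    - intros a b _ _ x _. apply hf_le_mf. }
  exact (RInt_gen_norm _ _ _ _ filt1 F2 I0 IM).
Qed.

Lemma Dn nu s B th n : 0 < nu -> exists th', forall x,
  Derive_n (fun x => G nu 0 th (x * s + B)) n x = s ^ n * G nu n th' (x * s + B).
Proof.
  intros Hnu. induction n as [|n [th' IH]].
  - exists th. intros x. simpl. symmetry. apply Rmult_1_l.
  - exists (th' + PI / 2). intros x. simpl Derive_n.
    rewrite (Derive_ext _ _ x IH).
    apply is_derive_unique.
    assert (Hc : is_derive (fun x => G nu n th' (x * s + B)) x (s * G nu (S n) (th' + PI / 2) (x * s + B))).
    { apply (is_derive_comp (G nu n th') (fun x => x * s + B)).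
      apply G_deriv; auto.
      auto_derive. auto. ring. }
    replace (s ^ S n * G nu (S n) (th' + PI / 2) (x * s + B))
      with (s ^ n * (s * G nu (S n) (th' + PI / 2) (x * s + B))) by (simpl; ring).
    apply (is_derive_scal (fun x => G nu n th' (x * s + B))). exact Hc.
Qed.

Theorem proposition2p3 (eps nu : R) (l : nat) :
  (eps = 1 \/ eps = -1) -> 0 < nu ->
  exists C : R, 0 < C /\
    forall t : R, 0 < t ->
      forall x y : R,
        Rabs (Derive_n (fun x' => K eps nu x' y t) l x)
          <= C * Rpower t (-5/4 - INR l / 2).
Proof.
  intros Heps Hnu.
  set (c := / (4 * Rpower PI (3/2) * Rpower nu (3/4))).
  exists (Rabs c * Rabs (M nu l) + 1). split.
  { pose proof (Rabs_pos c). pose proof (Rabs_pos (M nu l)). nra. }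
  intros t Ht x y.
  set (s := Rpower t (-1/2)).
  set (Y := y * Rpower t (-3/4)).
  set (B := Y ^ 2 / (4 * eps)).
  set (th := - (PI / 4 * eps)).
  set (A := Rpower t (-5/4) * c).
  assert (HK : forall x', K eps nu x' y t = A * G nu 0 th (x' * s + B)).
  { intros x'. unfold K, Kstar, A, G. fold c. fold s. fold Y.
    replace (Kstar_integrand eps nu (x' * s) Y) with (hf nu 0 th (x' * s + B)).
    ring.
    apply functional_extensionality. intros r. unfold hf, Kstar_integrand, ww, aa, th, B.
    simpl pow. rewrite Rmult_1_r. f_equal. f_equal. ring. }
  rewrite (Derive_n_ext _ _ l x HK).
  rewrite Derive_n_scal_l.
  destruct (Dn nu s B th l Hnu) as [th' Hth'].
  rewrite Hth'.
  pose proof (G_bound nu l th' (x * s + B) Hnu) as HG.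
  assert (Hs : 0 < s) by (unfold s, Rpower; apply exp_pos).
  assert (HP5 : 0 < Rpower t (-5/4)) by (unfold Rpower; apply exp_pos).
  assert (Hsl : s ^ l = Rpower t (-1/2 * INR l)).
  { rewrite <- Rpower_pow by auto. unfold s. rewrite Rpower_mult. reflexivity. }
  assert (HR : Rpower t (-5/4 - INR l / 2) = Rpower t (-5/4) * s ^ l).
  { rewrite Hsl, <- Rpower_plus. f_equal. field. }
  rewrite HR.
  assert (0 < s ^ l) by (apply pow_lt; auto).
  unfold A. rewrite !Rabs_mult. rewrite (Rabs_right (Rpower t (-5/4))) by lra.
  rewrite (Rabs_right (s ^ l)) by lra.
  assert (Rabs (G nu l th' (x * s + B)) <= Rabs (M nu l)).
  { eapply Rle_trans. apply HG. apply Rle_abs. }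
  pose proof (Rabs_pos c). pose proof (Rabs_pos (G nu l th' (x * s + B))).
  pose proof (Rabs_pos (M nu l)).
  assert (Rabs c * Rabs (G nu l th' (x * s + B)) <= Rabs c * Rabs (M nu l) + 1) by nra.
  assert (0 < Rpower t (-5/4) * s ^ l) by nra.
  replace (Rpower t (-5 / 4) * Rabs c * (s ^ l * Rabs (G nu l th' (x * s + B))))
    with ((Rpower t (-5/4) * s ^ l) * (Rabs c * Rabs (G nu l th' (x * s + B)))) by ring.
  rewrite (Rmult_comm (Rabs c * Rabs (M nu l) + 1)).
  apply Rmult_le_compat_l; lra.
Qed.
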